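(* Let $R>0$, let $(\beta_j)_{j\ge1}$ and $(\Gamma_n)_{n\ge0}$ be positive sequences, and let $(\mathbb{A}_{\boldsymbol\nu,\lambda})_{\boldsymbol\nu\in\mathcal I,\lambda\in\mathbb{N}_0}$ be a nonnegative sequence with $\mathbb{A}_{\boldsymbol\nu,0}=\delta_{\boldsymbol\nu,\mathbf 0}$, $\mathbb{A}_{\boldsymbol\nu,\lambda}=0$ for $\lambda>|\boldsymbol\nu|$, and otherwise $$\mathbb{A}_{\boldsymbol\nu+\mathbf e_j,\lambda}=R\sum_{\mathbf m\le\boldsymbol\nu}\binom{\boldsymbol\nu}{\mathbf m}\boldsymbol\beta^{\boldsymbol\nu-\mathbf m+\mathbf e_j}\,\Gamma_{|\boldsymbol\nu-\mathbf m|+1}\,\mathbb{A}_{\mathbf m,\lambda-1}\quad\text{for all }\boldsymbol\nu\in\mathcal I,\ j\ge1,\ 1\le\lambda\le|\boldsymbol\nu|+1.$$ Define $\mathbb{B}_{n,1}:=\Gamma_n$ for $n\ge1$ and $\mathbb{B}_{n,\lambda}:=\sum_{i=\lambda-1}^{n-1}\binom{n-1}{i}\Gamma_{n-i}\mathbb{B}_{i,\lambda-1}$ for $n\ge\lambda\ge2$. Then for all $\boldsymbol\nu\in\mathcal I$ with $\boldsymbol\nu\ne\mathbf 0$ and all $1\le\lambda\le|\boldsymbol\nu|$, $$\mathbb{A}_{\boldsymbol\nu,\lambda}=R^\lambda\,\boldsymbol\beta^{\boldsymbol\nu}\,\mathbb{B}_{|\boldsymbol\nu|,\lambda}.$$ Moreover,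 if the recursion holds with ''$\le$'' in place of ''$=$'' (with the same conditions $\mathbb{A}_{\boldsymbol\nu,0}=\delta_{\boldsymbol\nu,\mathbf0}$ and $\mathbb{A}_{\boldsymbol\nu,\lambda}=0$ for $\lambda>|\boldsymbol\nu|$), then $\mathbb{A}_{\boldsymbol\nu,\lambda}\le R^\lambda\boldsymbol\beta^{\boldsymbol\nu}\mathbb{B}_{|\boldsymbol\nu|,\lambda}$ for all such $\boldsymbol\nu,\lambda$.
   Context: $\mathcal I:=\{\boldsymbol\nu=(\nu_j)_{j\ge1}\in\mathbb{N}_0^\infty:|\boldsymbol\nu|:=\sum_j\nu_j<\infty\}$. $\mathbf e_j$ is the multiindex with $1$ in position $j$ and $0$ elsewhere; $\mathbf m\le\boldsymbol\nu$ means $m_j\le\nu_j$ for all $j$; $\binom{\boldsymbol\nu}{\mathbf m}=\prod_j\binom{\nu_j}{m_j}$; $\boldsymbol\beta^{\boldsymbol\nu}=\prod_j\beta_j^{\nu_j}$; $\delta_{\boldsymbol\nu,\mathbf0}$ is $1$ if $\boldsymbol\nu=\mathbf0$ and $0$ otherwise. *)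

(* Defs.v *)
(* Multiindices nu in I are finitely supported functions
   nat -> nat; coordinate j (0-based here) is nu j, corresponding to the
   paper's coordinate j+1. All finite quantities (|nu|, beta^nu, binomials,
   sums over m <= nu) are computed relative to a support bound N with
   nu j = 0 for all j >= N; they do not depend on the choice of N. *)
From HB Require Import structures.
From mathcomp Require Import all_boot all_order all_algebra.
Set Implicit Arguments. Unset Strict Implicit. Unset Printing Implicit Defensive.
Import Order.TTheory GRing.Theory Num.Theory.
Local Open Scope ring_scope.

Definition mindex := nat -> nat.

Definition supp_below (N : nat) (nu : mindex) : Prop :=
  forall j, (N <= j)%N -> nu j = 0%N.

Definition mabs (N : nat) (nu : mindex) : nat := (\sum_(j < N) nu j)%N.

Definition unit_mi (j : nat) : mindex := fun i => nat_of_bool (i == j).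

Definition maddi (nu mu : mindex) : mindex := fun i => (nu i + mu i)%N.
Definition msubi (nu mu : mindex) : mindex := fun i => (nu i - mu i)%N.

Definition mpow {K : pzRingType} (N : nat) (beta : nat -> K) (nu : mindex) : K :=
  \prod_(j < N) beta j ^+ nu j.

Definition mbinom (N : nat) (nu m : mindex) : nat := (\prod_(j < N) 'C(nu j, m j))%N.

Definition ext_mi (N M : nat) (m : {ffun 'I_N -> 'I_M}) : mindex :=
  fun j => match insub j with Some i => nat_of_ord (m i) | None => 0%N end.

Definition msum_le {K : nmodType} (N : nat) (nu : mindex) (F : mindex -> K) : K :=
  \sum_(m : {ffun 'I_N -> 'I_(mabs N nu).+1} | [forall i, (m i <= nu i)%N])
     F (ext_mi m).

(* B_{n,lambda}: B_{n,1} = Gamma_n, B_{n,l} = sum_{i=l-1}^{n-1} C(n-1,i) Gamma_{n-i} B_{i,l-1}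
   (values at lambda = 0 are irrelevant and set to 0) *)
Fixpoint Bcoef {K : pzRingType} (Gamma : nat -> K) (lam n : nat) : K :=
  match lam with
  | 0 => 0
  | l.+1 => if l == 0%N then Gamma n
            else \sum_(l <= i < n) 'C(n.-1, i)%:R * Gamma (n - i)%N * Bcoef Gamma l i
  end.

Definition A_base {K : numDomainType} (A : mindex -> nat -> K) : Prop :=
  (forall N nu lam, supp_below N nu -> 0 <= A nu lam) /\
  (forall N nu, supp_below N nu -> A nu 0%N = (mabs N nu == 0%N)%:R) /\
  (forall N nu lam, supp_below N nu -> (mabs N nu < lam)%N -> A nu lam = 0).

Definition A_rhs {K : numDomainType} (Rc : K) (beta Gamma : nat -> K)
  (A : mindex -> nat -> K) (N : nat) (nu : mindex) (j lam : nat) : K :=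
  Rc * msum_le N nu (fun m =>
     (mbinom N nu m)%:R * mpow N beta (maddi (msubi nu m) (unit_mi j))
     * Gamma (mabs N (msubi nu m)).+1 * A m lam.-1).

Definition A_rec {K : numDomainType} (rel : K -> K -> Prop) (Rc : K)
  (beta Gamma : nat -> K) (A : mindex -> nat -> K) : Prop :=
  forall N nu j lam, supp_below N nu -> (j < N)%N ->
    (1 <= lam <= (mabs N nu).+1)%N ->
    rel (A (maddi nu (unit_mi j)) lam) (A_rhs Rc beta Gamma A N nu j lam).

(* Main.v *)
Require Import Defs.
From HB Require Import structures.
From mathcomp Require Import all_boot all_order all_algebra.
From mathcomp Require Import ring.
From Stdlib Require Import FunctionalExtensionality.
Import Order.TTheory GRing.Theory Num.Theory.
Local Open Scope ring_scope.

Set Implicit Arguments. Unset Strict Implicit. Unset Printing Implicit Defensive.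

Section Vd.
Variable K : realFieldType.

Lemma coef_1X n k : ((1 + 'X : {poly K}) ^+ n)`_k = 'C(n,k)%:R.
Proof.
rewrite exprDn coef_sum.
under eq_bigr => i _ do rewrite expr1n mul1r coefMn coefXn.
case: (ltnP k n.+1) => hk.
  rewrite (bigD1 (Ordinal hk)) //= eqxx big1 ?addr0 // => i /negPf hi.
  rewrite eq_sym. move: hi; rewrite -val_eqE /= => ->; by rewrite mul0rn.
rewrite bin_small // big1 // => i _.
have : (i < k)%N by apply: leq_trans (ltn_ord i) hk.
by rewrite ltn_neqAle => /andP[/negPf]; rewrite eq_sym => -> _; rewrite mul0rn.
Qed.

Lemma inner_sum (a M : nat) : (a < M)%N ->
  \sum_(b < M) ('X^b *+ 'C(a,b) : {poly K}) = (1 + 'X)^+a.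
Proof.
move=> haM; rewrite exprDn (big_ord_widen M (fun i => (1:{poly K}) ^+ (a - i) * 'X^i *+ 'C(a, i)) haM) big_mkcond /=.
rewrite [RHS]big_mkcond /=; apply: eq_bigr => i _; case: ifP => hi; first by rewrite expr1n mul1r.
by rewrite bin_small ?mulr0n // ltnNge -ltnS hi.
Qed.

Lemma coef_count N M (a : 'I_N -> nat) : (forall i, a i < M)%N -> forall k,
  \sum_(f : {ffun 'I_N -> 'I_M}) (((\sum_i (f i : nat)) == k)%:R *+ (\prod_i 'C(a i, f i))%N : K)
  = 'C(\sum_i a i, k)%:R.
Proof.
move=> haM k.
have EQ : \prod_(i < N) \sum_(b < M) ('X^b *+ 'C(a i,b) : {poly K}) = (1 + 'X)^+(\sum_i a i).
  rewrite -prodrXr; apply: eq_bigr => i _; exact: inner_sum.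
rewrite -coef_1X -EQ bigA_distr_bigA /= coef_sum; apply: eq_bigr => f _.
have -> : \prod_(i < N) ('X^(f i) *+ 'C(a i, f i) : {poly K}) =
   'X^(\sum_i (f i : nat)) *+ (\prod_i 'C(a i, f i))%N.
  rewrite -mulr_natr natr_prod -prodrXr -big_split /=; apply: eq_bigr => i _.
  by rewrite mulr_natr.
by rewrite coefMn coefXn eq_sym.
Qed.

Lemma vander N M (a : 'I_N -> nat) (h : nat -> K) : (forall i, a i < M)%N ->
  \sum_(f : {ffun 'I_N -> 'I_M}) (\prod_i 'C(a i, f i))%:R * h (\sum_i (f i : nat))%N
  = \sum_(k < (\sum_i a i).+1) 'C(\sum_i a i, k)%:R * h k.
Proof.
move=> haM.
under [RHS]eq_bigr => k _ do rewrite -(coef_count haM) mulr_suml.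
rewrite exchange_big /=; apply: eq_bigr => f _.
set n := (\sum_i a i)%N; set s := (\sum_i (f i : nat))%N.
case: (ltnP s n.+1) => hs.
  rewrite (bigD1 (Ordinal hs)) //=.
  rewrite [X in _ + X]big1; last first.
    move=> i /negPf hi; move: hi; rewrite -val_eqE /= eq_sym => ->.
    by rewrite mul0rn mul0r.
  by rewrite addr0 eqxx /= mulr1n.
have -> : (\prod_i 'C(a i, f i))%N = 0%N.
  case: (boolP [forall i, (f i <= a i)%N]) => [/forallP hall | /forallPn [i]].
    have : (s <= n)%N by apply: leq_sum => i _; exact: hall.
    by rewrite leqNgt hs.
  rewrite -ltnNge => hi; rewrite (bigD1 i) //= bin_small //.
by rewrite mul0r big1 // => i _; rewrite mulr0n mul0r.
Qed.
End Vd.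

Section Basic.
Variable K : realFieldType.
Variable beta : nat -> K.

Lemma ext_mi_ord N M (m : {ffun 'I_N -> 'I_M}) (i : 'I_N) : ext_mi m i = m i.
Proof. by rewrite /ext_mi valK. Qed.

Lemma ext_mi_supp N M (m : {ffun 'I_N -> 'I_M}) : supp_below N (ext_mi m).
Proof. by move=> j hj; rewrite /ext_mi insubF // ltnNge hj. Qed.

Lemma mabs_ext N M (m : {ffun 'I_N -> 'I_M}) : mabs N (ext_mi m) = (\sum_i (m i : nat))%N.
Proof. by apply: eq_bigr => i _; rewrite ext_mi_ord. Qed.

Lemma mbinom_ext N M nu (m : {ffun 'I_N -> 'I_M}) :
  mbinom N nu (ext_mi m) = (\prod_(i < N) 'C(nu i, m i))%N.
Proof. by apply: eq_bigr => i _; rewrite ext_mi_ord. Qed.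

Lemma mabs_add N a b : mabs N (maddi a b) = (mabs N a + mabs N b)%N.
Proof. by rewrite /mabs -big_split. Qed.

Lemma mpow_add N a b : mpow N beta (maddi a b) = mpow N beta a * mpow N beta b.
Proof. by rewrite /mpow -big_split; apply: eq_bigr => i _; rewrite exprD. Qed.

Lemma mabs_unit N j : (j < N)%N -> mabs N (unit_mi j) = 1%N.
Proof.
move=> hj; rewrite /mabs (bigD1 (Ordinal hj)) //= /unit_mi eqxx big1 // => i.
by rewrite -val_eqE /= => /negPf ->.
Qed.

Lemma mpow_unit N j : (j < N)%N -> mpow N beta (unit_mi j) = beta j.
Proof.
move=> hj; rewrite /mpow (bigD1 (Ordinal hj)) //= /unit_mi eqxx big1 ?mulr1 // => i.
by rewrite -val_eqE /= => /negPf ->.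
Qed.

Lemma eq_mabs N a b : (forall i, (i < N)%N -> a i = b i) -> mabs N a = mabs N b.
Proof. by move=> h; apply: eq_bigr => i _; rewrite h. Qed.

Lemma eq_mpow N a b : (forall i, (i < N)%N -> a i = b i) -> mpow N beta a = mpow N beta b.
Proof. by move=> h; apply: eq_bigr => i _; rewrite h. Qed.

Lemma mpow_gt0 N a : (forall j, 0 < beta j) -> 0 < mpow N beta a.
Proof. by move=> hb; apply: prodr_gt0 => i _; rewrite exprn_gt0. Qed.

Lemma le_mabs N (nu : mindex) (i : 'I_N) : (nu i <= mabs N nu)%N.
Proof. by rewrite /mabs (bigD1 i) //= leq_addr. Qed.

End Basic.

Section RHS.
Variable K : realFieldType.
Variables (Rc : K) (beta Gamma : nat -> K).

Definition V N l m : K :=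
  if l == 0%N then (mabs N m == 0%N)%:R
  else if (mabs N m < l)%N then 0
  else Rc ^+ l * mpow N beta m * Bcoef Gamma l (mabs N m).

Lemma rhs_V N nu j lam : supp_below N nu -> (j < N)%N ->
  (1 <= lam <= (mabs N nu).+1)%N ->
  A_rhs Rc beta Gamma (fun m l => V N l m) N nu j lam = V N lam (maddi nu (unit_mi j)).
Proof.
move=> hnu hj /andP[hl1 hl2].
set n := mabs N nu.
have hn1 : mabs N (maddi nu (unit_mi j)) = n.+1 by rewrite mabs_add mabs_unit // addn1.
have hp : mpow N beta (maddi nu (unit_mi j)) = mpow N beta nu * beta j
  by rewrite mpow_add mpow_unit.
have hsub : forall M (m : {ffun 'I_N -> 'I_M}), (forall i : 'I_N, m i <= nu i)%N ->
   mabs N (msubi nu (ext_mi m)) = (n - \sum_(i < N) (m i : nat))%N.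
  move=> M m hm; rewrite -mabs_ext /n /mabs -sumnB; last by move=> i _; rewrite ext_mi_ord.
  by [].
have hpw : forall M (m : {ffun 'I_N -> 'I_M}), (forall i : 'I_N, m i <= nu i)%N ->
   mpow N beta (maddi (msubi nu (ext_mi m)) (unit_mi j)) * mpow N beta (ext_mi m)
   = mpow N beta nu * beta j.
  move=> M m hm; rewrite mpow_add mpow_unit // mulrAC -mpow_add; congr (_ * _).
  apply: eq_mpow => i hi; rewrite /maddi /msubi.
  have -> : i = Ordinal hi by [].
  by rewrite ext_mi_ord subnK.
rewrite /A_rhs /msum_le {2}/V hn1 hp.
case: lam hl1 hl2 => [//|[|l]] _ hl2 /=.
-
  pose m0 : {ffun 'I_N -> 'I_(mabs N nu).+1} := [ffun => ord0].
  have h0 : forall i : 'I_N, (m0 i <= nu i)%N by move=> i; rewrite ffunE.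
  rewrite (bigD1 m0) /=; last by apply/forallP.
  rewrite big1 ?addr0; last first.
    move=> m /andP[_ hne]; rewrite /V /= mabs_ext.
    case: eqP => [/eqP|]; last by rewrite mulr0.
    rewrite sum_nat_eq0 => /forallP h00; case/eqP: hne; apply/ffunP => i.
    rewrite ffunE; apply/val_inj => /=; exact/eqP/h00.
  have hs0 : (\sum_(i < N) (m0 i : nat))%N = 0%N by rewrite big1 // => i _; rewrite ffunE.
  have hp0 : mpow N beta (ext_mi m0) = 1.
    by rewrite /mpow big1 // => i _; rewrite ext_mi_ord ffunE expr0.
  rewrite /V /= mabs_ext hsub // mbinom_ext hs0 subn0 eqxx.
  rewrite big1; last by move=> i _; rewrite ffunE bin0.
  rewrite -(hpw _ _ h0) hp0 !mulr1 mul1r expr1 /n; ring.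
- have hl2' : (l.+2 <= n.+1)%N by [].
  rewrite ltnNge hl2' /=.
  set c := Rc ^+ l.+1 * (mpow N beta nu * beta j).
  pose h i := c * (Gamma (n - i).+1 * (if (i < l.+1)%N then 0 else Bcoef Gamma l.+1 i)).
  have step : \sum_(m : {ffun 'I_N -> 'I_n.+1} | [forall i, (m i <= nu i)%N])
     (mbinom N nu (ext_mi m))%:R *
     mpow N beta (maddi (msubi nu (ext_mi m)) (unit_mi j)) *
     Gamma (mabs N (msubi nu (ext_mi m))).+1 * V N l.+1 (ext_mi m) =
     \sum_(m : {ffun 'I_N -> 'I_n.+1}) (\prod_(i < N) 'C(nu i, m i))%:R * h (\sum_(i < N) (m i : nat))%N.
    rewrite [RHS](bigID (fun m : {ffun 'I_N -> 'I_n.+1} => [forall i, (m i <= nu i)%N])) /=.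
    rewrite [X in _ = _ + X]big1 ?addr0; last first.
      move=> m /forallPn [i]; rewrite -ltnNge => hi.
      by rewrite (bigD1 i) //= bin_small // mul0n mul0r.
    apply: eq_bigr => m /forallP hm.
    rewrite /V mbinom_ext hsub // mabs_ext /h.
    case: ifP => _; first by rewrite !mulr0.
    rewrite /c -(hpw _ _ hm); ring.
  rewrite step (vander (a := fun i : 'I_N => nu i)); last by move=> i; rewrite ltnS le_mabs.
  rewrite -/(mabs N nu) -/n.
  have -> : \sum_(k < n.+1) 'C(n, k)%:R * h k = c * \sum_(k < n.+1) 'C(n,k)%:R *
      (Gamma (n - k).+1 * (if (k < l.+1)%N then 0 else Bcoef Gamma l.+1 k)).
    by rewrite mulr_sumr; apply: eq_bigr => k _; rewrite /h; ring.
  rewrite -(big_mkord xpredT (fun k => 'C(n,k)%:R * (Gamma (n - k).+1 * (if (k < l.+1)%N then 0 else Bcoef Gamma l.+1 k)))) (@big_cat_nat _ _ _ l.+1) //=.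
  rewrite big_nat_cond big1 ?add0r; last first.
    by move=> i /andP[/andP[_ ->] _]; rewrite mulr0 mulr0.
  rewrite (@eq_big_nat _ _ _ _ _ _ (fun i => 'C(n,i)%:R * Gamma (n.+1 - i) * Bcoef Gamma l.+1 i)); last first.
    by move=> i /andP[hi1 hi2]; rewrite ltnNge hi1 /= subSn // mulrA.
  transitivity (Rc ^+ l.+2 * (mpow N beta nu * beta j) *
      \sum_(l.+1 <= i < n.+1) 'C(n,i)%:R * Gamma (n.+1 - i) * Bcoef Gamma l.+1 i).
    rewrite /c !exprS; ring.
  by [].
exact: ltnW.
Qed.
End RHS.

Section Main.
Variable K : realFieldType.
Variables (Rc : K) (beta Gamma : nat -> K).

Lemma mainV (r : K -> K -> Prop) (hrefl : forall x, r x x)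
  (htrans : forall x y z, r x y -> r y z -> r x z)
  (hmono : forall (A : mindex -> nat -> K) N nu j lam, supp_below N nu ->
     (forall m : {ffun 'I_N -> 'I_(mabs N nu).+1}, [forall i, (m i <= nu i)%N] ->
        r (A (ext_mi m) lam.-1) (V Rc beta Gamma N lam.-1 (ext_mi m))) ->
     r (A_rhs Rc beta Gamma A N nu j lam)
       (A_rhs Rc beta Gamma (fun m l => V Rc beta Gamma N l m) N nu j lam))
  (A : mindex -> nat -> K) :
  A_base A -> A_rec r Rc beta Gamma A ->
  forall n N nu, supp_below N nu -> (mabs N nu <= n)%N ->
  forall lam, r (A nu lam) (V Rc beta Gamma N lam nu).
Proof.
move=> [hA0 [hA1 hA2]] hrec n N.
have base : forall nu lam, supp_below N nu -> (lam == 0%N) || (mabs N nu < lam)%N ->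
    r (A nu lam) (V Rc beta Gamma N lam nu).
  move=> nu lam hnu /orP[/eqP ->|hlt].
    by rewrite (hA1 N nu hnu) /V eqxx.
  rewrite (hA2 N nu lam hnu hlt) /V hlt.
  case: lam hlt => [|l]; first by rewrite ltn0.
  by move=> _ /=; apply: hrefl.
elim: n => [|n IH] nu hnu hn lam;
  (case: (boolP ((lam == 0%N) || (mabs N nu < lam)%N)) => [/(base _ _ hnu) //|]);
  rewrite negb_or -lt0n -leqNgt => /andP[hl0 hln].
  by move: (leq_trans hl0 (leq_trans hln hn)).
have [i hi] : exists i : 'I_N, (0 < nu i)%N.
  case: (boolP [exists i : 'I_N, (0 < nu i)%N]) => [/existsP //|/existsPn h].
  exfalso; move: hln; rewrite /mabs big1 => [|k _].
    by rewrite leqn0 => /eqP hz; move: hl0; rewrite hz.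
  by move: (h k); rewrite lt0n negbK => /eqP.
set nu' := msubi nu (unit_mi i).
have hnu' : supp_below N nu' by move=> k hk; rewrite /nu' /msubi hnu.
have e : maddi nu' (unit_mi i) = nu.
  apply: functional_extensionality => k; rewrite /nu' /maddi /msubi /unit_mi.
  by case: eqP => [->|_]; [rewrite subnK | rewrite subn0 addn0].
have habs : mabs N nu = (mabs N nu').+1 by rewrite -{1}e mabs_add mabs_unit // addn1.
rewrite -e.
apply: htrans (hrec N nu' i lam hnu' (ltn_ord i) _) _.
  by rewrite hl0 -habs.
rewrite -rhs_V //; last by rewrite hl0 -habs.
apply: hmono => // m hm.
apply: IH; first exact: ext_mi_supp.
have hs : (\sum_(k < N) (m k : nat) <= mabs N nu')%N.
  by apply: leq_sum => k _; move/forallP: hm => /(_ k).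
rewrite mabs_ext; apply: leq_trans hs _.
by rewrite -ltnS -habs.
Qed.

End Main.

Unset Implicit Arguments.
Set Strict Implicit.

Theorem lemma6p1 (K : realFieldType) (Rc : K) (beta Gamma : nat -> K) :
  0 < Rc -> (forall j, 0 < beta j) -> (forall n, 0 < Gamma n) ->
  (forall A : mindex -> nat -> K,
     A_base A -> A_rec (fun x y => x = y) Rc beta Gamma A ->
     forall N nu lam, supp_below N nu -> (0 < mabs N nu)%N ->
       (1 <= lam <= mabs N nu)%N ->
       A nu lam = Rc ^+ lam * mpow N beta nu * Bcoef Gamma lam (mabs N nu)) /\
  (forall A : mindex -> nat -> K,
     A_base A -> A_rec (fun x y => x <= y) Rc beta Gamma A ->
     forall N nu lam, supp_below N nu -> (0 < mabs N nu)%N ->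
       (1 <= lam <= mabs N nu)%N ->
       A nu lam <= Rc ^+ lam * mpow N beta nu * Bcoef Gamma lam (mabs N nu)).
Proof.
move=> hR hb hG.
have hV : forall N nu lam, (1 <= lam <= mabs N nu)%N ->
    V Rc beta Gamma N lam nu = Rc ^+ lam * mpow N beta nu * Bcoef Gamma lam (mabs N nu).
  move=> N nu lam /andP[h1 h2]; case: lam h1 h2 => // lam _ h2; by rewrite /V /= ltnNge h2.
split=> A hA hrec N nu lam hnu _ hl.
- rewrite -hV //.
  refine (@mainV K Rc beta Gamma (fun x y => x = y) _ _ _ A hA hrec (mabs N nu) N nu hnu (leqnn _) lam) => //.
    by move=> x y z -> ->.
  move=> A' N' nu' j lam' _ h; rewrite /A_rhs /msum_le; congr (_ * _).
  by apply: eq_bigr => m hm; rewrite h.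
- rewrite -hV //.
  refine (@mainV K Rc beta Gamma (fun x y => x <= y) _ _ _ A hA hrec (mabs N nu) N nu hnu (leqnn _) lam) => //.
    by move=> x y z; apply: le_trans.
  move=> A' N' nu' j lam' _ h; rewrite /A_rhs /msum_le.
  apply: ler_wpM2l; first exact: ltW.
  apply: ler_sum => m hm; apply: ler_wpM2l; last exact: h.
  apply: mulr_ge0; last exact: ltW.
  apply: mulr_ge0; first exact: ler0n.
  exact/ltW/mpow_gt0.
Qed.
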